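(* For every $A\subseteq\Omega$, $$\mu^*(A) = \inf\Big\{c\in(0,1]: \liminf_{t\to\infty} cE_t\ge \mathbf{1}_A \text{ pointwise on }\Omega\Big\} = \inf\Big\{c\in(0,1]: \sup_{t\in\mathbb{N}_0} cE_t\ge \mathbf{1}_A\text{ pointwise on }\Omega\Big\},$$ where in each infimum $c$ ranges over $(0,1]$ and $(E_t)_{t\in\mathbb{N}_0}$ ranges over all $\mathcal{P}$-e-processes (i.e. the infimum is over all $c$ for which some $\mathcal{P}$-e-process satisfies the displayed inequality).
   Context: Standing setup: $(\Omega, (\mathcal{F}_t)_{t\in\mathbb{N}_0}, \mathcal{F})$ is a filtered measurable space with $\mathcal{F} = \sigma\big(\bigcup_{t} \mathcal{F}_t\big)$. A stopping time is a map $\tau:\Omega\to\mathbb{N}_0\cup\{\infty\}$ with $\{\tau \le t\}\in\mathcal{F}_t$ for all $t$; $\mathcal{T}$ denotes the set of all stopping times. $\mathcal{P}$ is an arbitrary family of probability measures on $\mathcal{F}$. The inverse-capital measure is defined for every $A\subseteq\Omega$ by $\mu^*(A) = \inf_{\tau\in\mathcal{T}:\, A\subseteq\{\tau<\infty\}} \sup_{\mathbb{P}\in\mathcal{P}} \mathbb{P}(\tau<\infty)$. A $\mathcal{P}$-e-process is a nonnegative (possibly $[0,\infty]$-valued) process $(E_t)_{t\in\mathbb{N}_0}$ adapted to $(\mathcal{F}_t)$ such that $\mathbb{E}_{\mathbb{P}}[E_\tau]\le 1$ for every $\mathbb{P}\in\mathcal{P}$ and every $\tau\in\mathcal{T}$,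 with the convention $E_\infty=\limsup_{t\to\infty}E_t$. *)

(* Defs.v *)
From HB Require Import structures.
From mathcomp Require Import all_boot all_order all_algebra.
From mathcomp Require Import all_classical all_reals all_analysis measurable_realfun.
Set Implicit Arguments. Unset Strict Implicit. Unset Printing Implicit Defensive.
Import Order.TTheory GRing.Theory Num.Theory.
Local Open Scope classical_set_scope.
Local Open Scope ring_scope.
Local Open Scope ereal_scope.

Section Defs.
Context {d : measure_display} {T : measurableType d} {R : realType}.

Definition filtration (F : nat -> set (set T)) :=
  (forall t, sigma_algebra setT (F t)) /\
  (forall s t, (s <= t)%N -> F s `<=` F t).

(* Stopping times with values in N_0 ∪ {∞}; [None] encodes ∞. *)
Definition stopping_time (F : nat -> set (set T)) (tau : T -> option nat) :=
  forall t : nat, F t [set x | exists2 s, tau x = Some s & (s <= t)%N].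

Definition finite_event (tau : T -> option nat) : set T :=
  [set x | tau x <> None].

(* Inverse-capital measure mu*(A).  The sup over P is taken in [0,+oo]
   (hence the extra 0), so that sup over an empty family is 0. *)
Definition inverse_capital (F : nat -> set (set T))
    (Pfam : set (probability T R)) (A : set T) : \bar R :=
  ereal_inf [set ereal_sup (0 |` [set P (finite_event tau) | P in Pfam])
            | tau in [set tau | stopping_time F tau /\ A `<=` finite_event tau]].

Definition stopped (E : nat -> T -> \bar R) (tau : T -> option nat) : T -> \bar R :=
  fun x => match tau x with
           | Some t => E t x
           | None => limn_esup (fun t => E t x)
           end.

Definition adapted (F : nat -> set (set T)) (E : nat -> T -> \bar R) :=
  forall t (B : set (\bar R)), measurable B -> F t (E t @^-1` B).

Definition e_process (F : nat -> set (set T)) (Pfam : set (probability T R))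
    (E : nat -> T -> \bar R) :=
  (forall t x, 0 <= E t x) /\ adapted F E /\
  (forall P tau, Pfam P -> stopping_time F tau ->
     \int[P]_x stopped E tau x <= 1).

Definition inf_liminf (F : nat -> set (set T)) (Pfam : set (probability T R))
    (A : set T) : \bar R :=
  ereal_inf [set c%:E | c in [set c : R | (0 < c <= 1)%R /\
     exists E, e_process F Pfam E /\
       forall x, ((\1_A x : R)%:E <= limn_einf (fun t => c%:E * E t x))]].

Definition inf_sup (F : nat -> set (set T)) (Pfam : set (probability T R))
    (A : set T) : \bar R :=
  ereal_inf [set c%:E | c in [set c : R | (0 < c <= 1)%R /\
     exists E, e_process F Pfam E /\
       forall x, ((\1_A x : R)%:E <= ereal_sup (range (fun t => c%:E * E t x)))]].

End Defs.

(* Main.v *)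
Require Import Defs.
From HB Require Import structures.
From mathcomp Require Import all_boot all_order all_algebra.
From mathcomp Require Import all_classical all_reals all_analysis measurable_realfun.
From mathcomp Require Import lra.
Set Implicit Arguments. Unset Strict Implicit. Unset Printing Implicit Defensive.
Import Order.TTheory GRing.Theory Num.Theory.
Local Open Scope classical_set_scope.
Local Open Scope ring_scope.
Local Open Scope ereal_scope.

Section Aux.
Context {R : realType}.

Lemma einf_ge (u : (\bar R)^nat) (a : \bar R) N :
  (forall n, (N <= n)%N -> a <= u n) -> a <= limn_einf u.
Proof.
move=> H; rewrite limn_einf_lim (cvg_lim _ (@cvg_einfs_sup R u)) //.
apply: le_trans (ereal_sup_ubound _); last by exists N.
by apply: le_ereal_inf_tmp => _ [k /= Nk <-]; exact: H.
Qed.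

Lemma einf_le_sup (u : (\bar R)^nat) : limn_einf u <= ereal_sup (range u).
Proof.
rewrite limn_einf_lim (cvg_lim _ (@cvg_einfs_sup R u)) //.
apply: ge_ereal_sup => _ [n _ <-].
apply: le_trans (ereal_sup_ubound _); last by exists n.
by apply: ereal_inf_lbound; exists n => /=.
Qed.

Lemma esup_le (u : (\bar R)^nat) (a : \bar R) :
  (forall n, u n <= a) -> limn_esup u <= a.
Proof.
move=> H; rewrite limn_esup_lim (cvg_lim _ (@cvg_esups_inf R u)) //.
apply: (@le_trans _ _ (esups u 0%N)); first by apply: ereal_inf_lbound; exists 0%N.
by apply: ge_ereal_sup => _ [k _ <-]; exact: H.
Qed.

End Aux.

Import HBNNSimple.
Section Main.
Context {d : measure_display} {T : measurableType d} {R : realType}.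
Variables (F : nat -> set (set T)) (Pfam : set (probability T R)).
Hypothesis hF : filtration F.
Hypothesis hgen : (@measurable d T) = <<s \bigcup_t F t >>.

Lemma FsubM t S : F t S -> measurable S.
Proof. by move=> FS; rewrite hgen; apply: sub_sigma_algebra; exists t. Qed.

Lemma F0 t : F t set0.
Proof. by case: (hF.1 t). Qed.

Lemma FT t : F t setT.
Proof. by case: (hF.1 t) => h0 hC _; rewrite -(setD0 setT); apply: hC. Qed.

Lemma FC t S : F t S -> F t (~` S).
Proof. by case: (hF.1 t) => _ hC _ /hC; rewrite setTD. Qed.

Lemma Fbig t (S : (set T)^nat) : (forall n, F t (S n)) -> F t (\bigcup_n S n).
Proof. by case: (hF.1 t) => _ _ hU; apply: hU. Qed.

Lemma two_valued t (S : set T) (g : T -> \bar R) a b (B : set (\bar R)) :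
  F t S -> (forall x, S x -> g x = a) -> (forall x, ~ S x -> g x = b) ->
  F t (g @^-1` B).
Proof.
move=> FS ga gb.
have gE x : g x = (if `[< S x >] then a else b).
  by case: asboolP => Sx; [exact: ga|exact: gb].
case: (pselect (B a)) => Ba; case: (pselect (B b)) => Bb.
- suff -> : g @^-1` B = setT by apply: FT.
  by apply/seteqP; split => x //= _; rewrite gE; case: ifP.
- suff -> : g @^-1` B = S by [].
  apply/seteqP; split => x /=; rewrite gE; case: asboolP => //.
- suff -> : g @^-1` B = ~` S by apply: FC.
  apply/seteqP; split => x /=; rewrite gE; case: asboolP => //.
- suff -> : g @^-1` B = set0 by apply: F0.
  by apply/seteqP; split => x //=; rewrite gE; case: ifP.
Qed.

Lemma fe_meas tau : stopping_time F tau -> measurable (finite_event tau).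
Proof.
move=> st.
have -> : finite_event tau =
   \bigcup_t [set x | exists2 s, tau x = Some s & (s <= t)%N].
  rewrite /finite_event; apply/seteqP; split => x /=.
    by case E : (tau x) => [s|//] _; exists s => //; exists s.
  by move=> [t _ [s -> _]].
by apply: bigcupT_measurable => t; apply: (@FsubM t).
Qed.

Lemma markov_lb (P : probability T R) (f : T -> \bar R) (S : set T) (k : R) :
  measurable S -> (0 <= k)%R -> (forall x, 0 <= f x) ->
  (forall x, S x -> k%:E <= f x) -> k%:E * P S <= \int[P]_x f x.
Proof.
move=> mS k0 f0 Sf; rewrite ge0_integralTE //.
pose g := scale_nnsfun (indic_nnsfun R mS) k0.
have -> : k%:E * P S = sintegral P (g : T -> R).
  by rewrite sintegralrM sintegral_indic.
apply: ereal_sup_ubound; exists g => // x /=.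

case: (pselect (S x)) => Sx.
  by rewrite /mindic indicE mem_set // mulr1; exact: Sf.
by rewrite /mindic indicE memNset // mulr0.
Qed.

Lemma int_le_meas (P : probability T R) (f g : T -> \bar R) :
  (forall x, 0 <= f x) -> measurable_fun setT g -> (forall x, f x <= g x) ->
  \int[P]_x f x <= \int[P]_x g x.
Proof.
move=> f0 mg fg; rewrite [X in X <= _]ge0_integralTE //.
apply: ge_ereal_sup => _ [h hf <-].
apply: (@le_trans _ _ (\int[P]_x (h x)%:E)).
  rewrite ge0_integralTE //; first by apply: ereal_sup_ubound; exists h.
  by move=> x; rewrite lee_fin.
apply: ge0_le_integral => //.
- by move=> x _; rewrite lee_fin.
- by apply/measurable_EFinP; exact: measurable_funTS.
- by move=> x _; exact: le_trans (hf x) (fg x).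
Qed.

Lemma ind_le1 (A : set T) x : ((\1_A x : R)%:E <= 1).
Proof. by rewrite indicE lee_fin; case: (x \in A). Qed.

Lemma const_ok A : inf_liminf F Pfam A <= 1.
Proof.
apply: ereal_inf_lbound; exists 1%R => //; split; first by rewrite ltr01 lexx.
exists (fun (_ : nat) (_ : T) => (1 : \bar R)); split; [split; [|split]|].
- by move=> *; rewrite lee01.
- move=> t B mB; apply: (@two_valued t setT _ 1 1) => //; exact: FT.
- move=> P tau PP st.
  have -> : stopped (fun (_ : nat) (_ : T) => (1 : \bar R)) tau = cst (1 : \bar R).
    rewrite funeqE => x; rewrite /stopped; case: (tau x) => // .
    by rewrite (cvg_limn_einf_sup (cvg_cst (1 : \bar R))).2.
  by rewrite integral_cst // mul1e probability_le1.
- move=> x; apply: le_trans (ind_le1 A x) _.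
  by apply: (einf_ge (N:=0)) => n _; rewrite mul1e.
Qed.

Lemma part3 A : inf_sup F Pfam A <= inf_liminf F Pfam A.
Proof.
apply: ereal_inf_le_tmp => _ [c [cc [E [HE Hl]]] <-]; exists c => //.
split => //; exists E; split => // x.
exact: le_trans (Hl x) (einf_le_sup _).
Qed.

Lemma part1 A : inf_liminf F Pfam A <= inverse_capital F Pfam A.
Proof.
apply: le_ereal_inf_tmp => _ [tau [st Afe] <-].
set s := ereal_sup _.
have s0 : 0 <= s by apply: ereal_sup_ubound; left.
have Ps : forall P, Pfam P -> P (finite_event tau) <= s.
  by move=> P PP; apply: ereal_sup_ubound; right; exists P.
case: (leP 1 s) => [s1|s1]; first exact: le_trans (const_ok A) s1.
have sfin : s \is a fin_num by rewrite ge0_fin_numE // (lt_trans s1) ?ltey.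
have r0 : (0 <= fine s)%R by rewrite -lee_fin fineK.
have r1 : (fine s < 1)%R by rewrite -lte_fin fineK.
have sE : s = (fine s)%:E by rewrite fineK.
move: (fine s) sE r0 r1 => r sE r0 r1; rewrite sE in Ps *.
apply/lee_addgt0Pr => e e0.
pose c := Num.min (r + e)%R 1%R.
have c0 : (0 < c)%R by rewrite lt_min ltr01 andbT; lra.
have c1 : (c <= 1)%R by rewrite ge_min lexx orbT.
have rc : (r < c)%R by rewrite lt_min r1 andbT; lra.
apply: (@le_trans _ _ c%:E); last by rewrite -EFinD lee_fin ge_min lexx.
apply: ereal_inf_lbound; exists c => //; split; first by rewrite c0 c1.
pose E (t : nat) (x : T) : \bar R :=
  if tau x is Some s' then (if (s' <= t)%N then (c^-1)%R%:E else 0) else 0.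
have E0 t x : 0 <= E t x.
  rewrite /E; case: (tau x) => // s'; case: ifP => // _.
  by rewrite lee_fin invr_ge0 ltW.
have Ec t x : E t x <= (c^-1)%R%:E.
  have ci0 : 0 <= (c^-1)%R%:E by rewrite lee_fin invr_ge0 ltW.
  rewrite /E; case: (tau x) => [s'|//]; case: ifP => // _.
exists E; split; [split; [|split]|].
- exact: E0.
- move=> t B mB.
  apply: (@two_valued t [set x | exists2 s, tau x = Some s & (s <= t)%N] _
           (c^-1)%R%:E 0) => //.
  + by move=> x [s' tx st']; rewrite /E tx st'.
  + move=> x nx; rewrite /E; case tx: (tau x) => [s'|//]; case: ifP => // st'.
    by exfalso; apply: nx; exists s'.
- move=> P tau' PP st'.
  have mfe := fe_meas st.
  apply: (@le_trans _ _ (\int[P]_x ((c^-1) * \1_(finite_event tau) x)%R%:E)).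
    apply: int_le_meas.
    + move=> x; rewrite /stopped; case: (tau' x) => [t|]; first exact: E0.
      apply: le_trans (limn_einf_sup _).
      by apply: (einf_ge (N:=0%N)) => n _; exact: E0.
    + by apply/measurable_EFinP; apply: measurable_funM.
    + move=> x; rewrite /stopped.
      case: (pselect (finite_event tau x)) => fx.
        rewrite indicE mem_set // mulr1.
        case: (tau' x) => [t|]; first exact: Ec.
        by apply: esup_le => n; exact: Ec.
      rewrite indicE memNset // mulr0.
      have tx : tau x = None.
        by case tx: (tau x) => [s'|//]; exfalso; apply: fx; rewrite /finite_event /= tx.
      have Ez t : E t x = 0 by rewrite /E tx.
      case: (tau' x) => [t|]; first by rewrite Ez.
      by apply: esup_le => n; rewrite Ez.
  rewrite (@integralZl_indic _ _ _ P setT measurableT (fun _ => finite_event tau)) //; last first.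
    by move=> /ltW; rewrite leNgt invr_gt0 c0.
  rewrite integral_indic // setIT lee_pdivrMl // mule1.
  by apply: le_trans (Ps P PP) _; rewrite lee_fin ltW.
- move=> x; case: (pselect (A x)) => Ax.
    have := Afe x Ax; rewrite /finite_event.
    case tx: (tau x) => [s'|//] _.
    rewrite indicE mem_set //=; apply: (einf_ge (N:=s')) => n sn.
    by rewrite /E tx sn -EFinM mulfV ?gt_eqF.
  rewrite indicE memNset //=; apply: (einf_ge (N:=0%N)) => n _.
  by apply: mule_ge0 => //; rewrite lee_fin ltW.
Qed.

Lemma part2 A : inverse_capital F Pfam A <= inf_sup F Pfam A.
Proof.
apply: le_ereal_inf_tmp => _ [c [/andP[c0 c1] [E [[E0 [Ead Eint]] Hsup]]] <-].
apply/lee_addgt0Pr => e e0.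
have ce0 : (0 < c + e)%R by lra.
pose a := (c + e)^-1%R.
have a0 : (0 < a)%R by rewrite invr_gt0.
pose tau (x : T) : option nat :=
  match pselect (exists t, a%:E <= E t x) with
  | left h => Some (ex_minn (P := fun t => a%:E <= E t x) h)
  | right _ => None
  end.
have tauS x s : tau x = Some s -> a%:E <= E s x.
  by rewrite /tau; case: pselect => // h [<-]; case: ex_minnP.
have tauN x : tau x = None -> forall t, ~ (a%:E <= E t x).
  by rewrite /tau; case: pselect => // h _ t Ht; apply: h; exists t.
have tauLe x t : (exists2 s, tau x = Some s & (s <= t)%N) <->
                 exists2 s, (s <= t)%N & a%:E <= E s x.
  split.
  - by move=> [s tx st]; exists s => //; exact: tauS.
  - move=> [s st Es]; rewrite /tau; case: pselect => [h|h]; last first.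
      by exfalso; apply: h; exists s.
    case: ex_minnP => m Pm minm; exists m => //; exact: leq_trans (minm _ Es) st.
have st : stopping_time F tau.
  move=> t.
  have -> : [set x | exists2 s, tau x = Some s & (s <= t)%N] =
      \bigcup_n (if (n <= t)%N then E n @^-1` `[a%:E, +oo]%classic else set0).
    apply/seteqP; split => x /=.
    - move/tauLe => [s st Es]; exists s => //; rewrite st /= in_itv /= Es.
      by rewrite leey.
    - move=> [n _]; case: ifP => // nt; rewrite /= in_itv /= => /andP[Es _].
      by apply/tauLe; exists n.
  apply: Fbig => n; case: ifP => nt; last exact: F0.
  apply: (proj2 hF _ _ nt); apply: Ead; exact: emeasurable_itv.
have Afe : A `<=` finite_event tau.
  move=> x Ax tx.
  have := Hsup x; rewrite indicE mem_set //= => H1.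
  have : (c * a)%:E < ereal_sup (range (fun t => c%:E * E t x)).
    apply: lt_le_trans H1; rewrite lte_fin ltr_pdivrMr // mul1r; lra.
  move/ereal_sup_gt => [_ [t _ <-]] Hlt.
  apply: (tauN x tx t); rewrite leNgt; apply/negP => Hn.
  have : c%:E * E t x <= c%:E * a%:E.
    by apply: lee_wpmul2l; [rewrite lee_fin ltW|exact: ltW].
  by rewrite -EFinM leNgt Hlt.
apply: (@le_trans _ _ (ereal_sup (0%R |` [set P (finite_event tau) | P in Pfam]))).
  by apply: ereal_inf_lbound; exists tau.
apply: ge_ereal_sup => _ [->|[P PP <-]].
  by rewrite -EFinD lee_fin ltW.
have mfe := fe_meas st.
have stop0 : forall x, 0 <= stopped E tau x.
  move=> x; rewrite /stopped; case: (tau x) => [t|]; first exact: E0.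
  apply: le_trans (limn_einf_sup _).
  by apply: (einf_ge (N:=0%N)) => n _; exact: E0.
have fa : forall x, finite_event tau x -> a%:E <= stopped E tau x.
  move=> x; rewrite /finite_event /stopped /=.
  by case tx: (tau x) => [s|//] _; exact: tauS.
have := le_trans (markov_lb P mfe (ltW a0) stop0 fa) (Eint P tau PP st).
by rewrite /a lee_pdivrMl // mule1 EFinD.
Qed.

End Main.

Theorem mainTheorem5 (d : measure_display) (T : measurableType d) (R : realType)
  (F : nat -> set (set T)) (Pfam : set (probability T R))
  (hF : filtration F)
  (hgen : (@measurable d T) = <<s \bigcup_t F t >>)
  (A : set T) :
  @inverse_capital d T R F Pfam A = inf_liminf F Pfam A /\
  @inverse_capital d T R F Pfam A = inf_sup F Pfam A.
Proof.
have h1 : inf_liminf F Pfam A <= @inverse_capital d T R F Pfam A.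
  exact: (@part1 d T R F Pfam hF hgen A).
have h2 : @inverse_capital d T R F Pfam A <= inf_sup F Pfam A.
  exact: (@part2 d T R F Pfam hF hgen A).
have h3 : inf_sup F Pfam A <= inf_liminf F Pfam A.
  exact: (@part3 d T R F Pfam A).
split; apply/le_anti; rewrite ?h1 ?h2 //=.
- by rewrite (le_trans h2 h3).
- by rewrite (le_trans h3 h1).
Qed.
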